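(* Let $S_2=\mathrm{span}\langle e,f\rangle$ be the two-dimensional Lie triple system with $[e,f,e]=2e$, $[e,f,f]=-2f$, over a field of characteristic zero, and let $U(S_2)$ be its universal enveloping algebra. Then for every $n\ge 0$, $(e^n,f,e)=-n\,e^n$, i.e. $-2(e^n,f,e)=2n\,e^n$.
   Context: A Lie triple system (L.t.s.) is a vector space $T$ with a trilinear product $[x,y,z]$ satisfying $[x,x,y]=0$, $[x,y,z]+[y,z,x]+[z,x,y]=0$, and $[a,b,[x,y,z]]=[[a,b,x],y,z]+[x,[a,b,y],z]+[x,y,[a,b,z]]$; the product on $S_2$ is determined by the given values together with these identities. For a unital nonassociative algebra $A$ with associator $(x,y,z)=(xy)z-x(yz)$, $\mathrm{LN_{alt}}(A)=\{a\in A : (a,x,y)=-(x,a,y)\ \forall x,y\in A\}$ is an L.t.s. with $[a,b,c]=a(bc)-b(ac)-c(ab)+c(ba)$. The universal enveloping algebra $U(T)$ is the unital algebra with an L.t.s. monomorphism $T\to\mathrm{LN_{alt}}(U(T))$ (elements of $T$ identified with their images) such that $ab=ba$ for $a,b\in T$, universal for L.t.s. homomorphisms into $\mathrm{LN_{alt}}(A)$ with this commutation property. For $c\in T$ the subalgebra generated by $c$ is associative, so $c^n$ is well defined ($c^0=1$). *)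

(* Defs.v *)
From HB Require Import structures.
From mathcomp Require Import all_boot all_order all_algebra.
Set Implicit Arguments. Unset Strict Implicit. Unset Printing Implicit Defensive.
Import GRing.Theory.
Local Open Scope ring_scope.

Record NAlg (K : fieldType) := {
  car :> lmodType K;
  nmul : car -> car -> car;
  none : car;
  nmulDl : forall x y z, nmul (x + y) z = nmul x z + nmul y z;
  nmulDr : forall x y z, nmul x (y + z) = nmul x y + nmul x z;
  nmulZl : forall (a : K) x y, nmul (a *: x) y = a *: nmul x y;
  nmulZr : forall (a : K) x y, nmul x (a *: y) = a *: nmul x y;
  nmul1l : forall x, nmul none x = x;
  nmul1r : forall x, nmul x none = x
}.

Section NAlgDefs.
Variables (K : fieldType) (A : NAlg K).
Local Notation "x ** y" := (nmul x y) (at level 40, left associativity).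

Definition nassoc (x y z : A) : A := (x ** y) ** z - x ** (y ** z).

Definition inLNalt (a : A) : Prop :=
  forall x y : A, nassoc a x y = - nassoc x a y.

Definition ltp (a b c : A) : A :=
  a ** (b ** c) - b ** (a ** c) - c ** (a ** b) + c ** (b ** a).

(* c^n, with c^0 = 1 and c^(n+1) = c c^n (any bracketing agrees since the
   subalgebra generated by an element of T is associative) *)
Fixpoint npow (c : A) (n : nat) : A :=
  match n with O => none A | S m => c ** npow c m end.

(* x, y are the images of the basis e, f of S_2 under a Lie triple system
   homomorphism S_2 -> LN_alt(A) whose image consists of commuting elements.
   The full product table of S_2 (forced by the L.t.s. identities from
   [e,f,e]=2e, [e,f,f]=-2f) is listed on all basis triples. *)
Definition S2_hom (x y : A) : Prop :=
  [/\ inLNalt x, inLNalt y, x ** y = y ** x,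
      [/\ ltp x y x = 2%:R *: x, ltp x y y = - (2%:R *: y),
          ltp y x x = - (2%:R *: x) & ltp y x y = 2%:R *: y]
    & [/\ ltp x x x = 0, ltp x x y = 0, ltp y y x = 0 & ltp y y y = 0]].
End NAlgDefs.

Definition NAlg_hom (K : fieldType) (A B : NAlg K) (h : A -> B) : Prop :=
  [/\ forall x y : A, h (x + y) = h x + h y,
      forall (a : K) (x : A), h (a *: x) = a *: h x,
      forall x y : A, h (nmul x y) = nmul (h x) (h y)
    & h (none A) = none B].

(* (A, e, f) is the universal enveloping algebra U(S_2): the inclusion
   S_2 -> LN_alt(A) (e |-> e, f |-> f) is an injective L.t.s. homomorphism with
   commuting image, universal among such homomorphisms. *)
Definition is_UEA_S2 (K : fieldType) (A : NAlg K) (e f : A) : Prop :=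
  [/\ S2_hom e f,
      (forall a b : K, a *: e + b *: f = 0 -> a = 0 /\ b = 0)
    & forall (B : NAlg K) (e' f' : B), S2_hom e' f' ->
        exists h : A -> B,
          [/\ NAlg_hom h, h e = e', h f = f'
            & forall g : A -> B, NAlg_hom g -> g e = e' -> g f = f' ->
                forall x, g x = h x]].

(* Main.v *)
Require Import Defs.
From mathcomp Require Import all_boot all_order all_algebra.
Import GRing.Theory.
Local Open Scope ring_scope.


Inductive zexp := ZAtom of nat | ZZero | ZAdd of zexp & zexp | ZOpp of zexp | ZMuln of zexp & nat.

Section ZE.
Variable V : zmodType.
Fixpoint zeval (env : seq V) (t : zexp) : V :=
  match t with
  | ZAtom i => nth 0 env i
  | ZZero => 0
  | ZAdd a b => zeval env a + zeval env b
  | ZOpp a => - zeval env a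
  | ZMuln a k => zeval env a *+ k
  end.
Fixpoint zcoef (t : zexp) (i : nat) : int :=
  match t with
  | ZAtom j => if j == i then 1 else 0
  | ZZero => 0
  | ZAdd a b => zcoef a i + zcoef b i
  | ZOpp a => - zcoef a i
  | ZMuln a k => zcoef a i *+ k
  end.
Lemma zeval_sum env t :
  zeval env t = \sum_(i < size env) nth 0 env i *~ zcoef t i.
Proof.
elim: t => [j||a IHa b IHb|a IHa|a IHa k] /=.
- case: (ltnP j (size env)) => hj.
    rewrite (bigD1 (Ordinal hj)) //= eqxx mulr1z big1 ?addr0 //.
    by move=> i /negPf; rewrite -val_eqE /= eq_sym => ->.
  rewrite nth_default // big1 // => i _.
  by case: eqP => [eij|]; [move: (ltn_ord i); rewrite -eij ltnNge hj | rewrite mulr0z].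
- by rewrite big1 // => i _; rewrite mulr0z.
- by rewrite IHa IHb -big_split /=; apply: eq_bigr => i _; rewrite mulrzDr.
- by rewrite IHa -sumrN; apply: eq_bigr => i _; rewrite mulrNz.
- rewrite IHa -sumrMnl; apply: eq_bigr => i _.
  by rewrite -mulr_natr mulrzA mulrz_nat.
Qed.
Lemma zeval0 env t : all (fun i => zcoef t i == 0) (iota 0 (size env)) -> zeval env t = 0.
Proof.
move/allP=> h; rewrite zeval_sum big1 // => i _.
by rewrite (eqP (h i _)) ?mulr0z // mem_iota /=.
Qed.
Lemma zcomb (L R a b : V) : a = b -> L - R - (a - b) = 0 -> L = R.
Proof. by move=> ->; rewrite subrr subr0 => /eqP; rewrite subr_eq0 => /eqP. Qed.
Lemma zcombk (L R a b : V) k : a = b -> L - R - (a - b) *+ k = 0 -> L = R.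
Proof. by move=> ->; rewrite subrr mul0rn subr0 => /eqP; rewrite subr_eq0 => /eqP. Qed.
Lemma zcombNk (L R a b : V) k : a = b -> L - R + (a - b) *+ k = 0 -> L = R.
Proof. by move=> ->; rewrite subrr mul0rn addr0 => /eqP; rewrite subr_eq0 => /eqP. Qed.
Lemma zfin (L R : V) : L - R = 0 -> L = R.
Proof. by move/eqP; rewrite subr_eq0 => /eqP. Qed.
End ZE.

Ltac zlookup x l :=
  match l with
  | x :: _ => constr:(0%N)
  | ?y :: _ => let _ := constr:(@erefl _ x : x = y) in constr:(0%N)
  | _ :: ?l' => let n := zlookup x l' in constr:(S n)
  end.
Ltac zatoms t l :=
  match t with
  | ?a + ?b => let l1 := zatoms a l in zatoms b l1
  | - ?a => zatoms a l
  | ?a *+ 0 => zatoms a l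
  | ?a *+ 1 => zatoms a l
  | ?a *+ 2 => zatoms a l
  | ?a *+ 3 => zatoms a l
  | ?a *+ 4 => zatoms a l
  | 0 => l
  | _ => let _ := zlookup t l in l
  | _ => constr:(t :: l)
  end.
Ltac zreify t l :=
  match t with
  | ?a + ?b => let x := zreify a l in let y := zreify b l in constr:(ZAdd x y)
  | - ?a => let x := zreify a l in constr:(ZOpp x)
  | ?a *+ 0 => let x := zreify a l in constr:(ZMuln x 0)
  | ?a *+ 1 => let x := zreify a l in constr:(ZMuln x 1)
  | ?a *+ 2 => let x := zreify a l in constr:(ZMuln x 2)
  | ?a *+ 3 => let x := zreify a l in constr:(ZMuln x 3)
  | ?a *+ 4 => let x := zreify a l in constr:(ZMuln x 4)
  | 0 => constr:(ZZero)
  | _ => let n := zlookup t l in constr:(ZAtom n)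
  end.
Ltac zsolve0 :=
  match goal with |- ?t = 0 =>
    let V := type of t in
    let l := zatoms t (@nil V) in
    let r := zreify t l in
    change (@zeval _ l r = 0); apply: zeval0; vm_compute; reflexivity
  end.
Ltac zsolve := apply: zfin; zsolve0.
Ltac zsolve_with H := first
  [ apply: (@zcombk _ _ _ _ _ 1 H); zsolve0
  | apply: (@zcombNk _ _ _ _ _ 1 H); zsolve0
  | apply: (@zcombk _ _ _ _ _ 2 H); zsolve0
  | apply: (@zcombNk _ _ _ _ _ 2 H); zsolve0 ].
Ltac zsw2 H1 H2 := first
  [ apply: (@zcombk _ _ _ _ _ 1 H1); zsolve_with H2
  | apply: (@zcombNk _ _ _ _ _ 1 H1); zsolve_with H2 ].
Ltac zsw3 H1 H2 H3 := first
  [ apply: (@zcombk _ _ _ _ _ 1 H1); zsw2 H2 H3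
  | apply: (@zcombNk _ _ _ _ _ 1 H1); zsw2 H2 H3 ].
Ltac zsw4 H1 H2 H3 H4 := first
  [ apply: (@zcombk _ _ _ _ _ 1 H1); zsw3 H2 H3 H4
  | apply: (@zcombNk _ _ _ _ _ 1 H1); zsw3 H2 H3 H4 ].
Ltac zstep H := first
  [ apply: (@zcombk _ _ _ _ _ 1 H) | apply: (@zcombNk _ _ _ _ _ 1 H) ].


Section Main.
Variables (K : fieldType) (A : NAlg K).
Local Notation "x ** y" := (nmul x y) (at level 40, left associativity).

Lemma nmul0l (y : A) : (0 : A) ** y = 0.
Proof. by rewrite -[X in X ** _](scale0r (0 : A)) nmulZl scale0r. Qed.
Lemma nmul0r (y : A) : y ** (0 : A) = 0.
Proof. by rewrite -[X in _ ** X](scale0r (0 : A)) nmulZr scale0r. Qed.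
Lemma nmulNl (x y : A) : (- x) ** y = - (x ** y).
Proof. by rewrite -scaleN1r nmulZl scaleN1r. Qed.
Lemma nmulNr (x y : A) : x ** (- y) = - (x ** y).
Proof. by rewrite -scaleN1r nmulZr scaleN1r. Qed.
Lemma nmulBl (x y z : A) : (x - y) ** z = x ** z - y ** z.
Proof. by rewrite nmulDl nmulNl. Qed.
Lemma nmulBr (x y z : A) : z ** (x - y) = z ** x - z ** y.
Proof. by rewrite nmulDr nmulNr. Qed.
Lemma nmulnl (x y : A) k : (x *+ k) ** y = (x ** y) *+ k.
Proof. by elim: k => [|k IH]; rewrite ?mulr0n ?nmul0l // !mulrS nmulDl IH. Qed.
Lemma nmulnr (x y : A) k : y ** (x *+ k) = (y ** x) *+ k.
Proof. by elim: k => [|k IH]; rewrite ?mulr0n ?nmul0r // !mulrS nmulDr IH. Qed.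

Lemma LNexp (a : A) : inLNalt a -> forall u v : A,
  a ** (u ** v) = (a ** u) ** v + (u ** a) ** v - u ** (a ** v).
Proof. move=> h u v. have H := h u v. rewrite /nassoc in H. zsolve_with H. Qed.

Variables (e f : A).
Hypothesis he : inLNalt e.
Hypothesis hf : inLNalt f.
Hypothesis hc : e ** f = f ** e.

Definition Dv (z : A) := e ** (f ** z) - f ** (e ** z).

Lemma Dv_der (x y : A) : Dv (x ** y) = Dv x ** y + x ** Dv y.
Proof.
have hE : (f ** x) ** e + e ** (x ** f) + (x ** f) ** e
          = (e ** x) ** f + f ** (x ** e) + (x ** e) ** f.
  have H1 := he x f; have H2 := hf x e; rewrite /nassoc -hc in H1 H2.
  zsw2 H1 H2.
have hEy := congr1 (fun z : A => z ** y) hE; rewrite /= !nmulDl in hEy.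
rewrite /Dv (LNexp _ he x y) (LNexp _ hf x y) !nmulDr ?nmulNr ?nmulDr.
rewrite (LNexp _ he (f ** x) y) (LNexp _ he (x ** f) y) (LNexp _ he x (f ** y)).
rewrite (LNexp _ hf (e ** x) y) (LNexp _ hf (x ** e) y) (LNexp _ hf x (e ** y)).
rewrite ?nmulDl ?nmulNl ?nmulDr ?nmulNr.
zsolve_with hEy.
Qed.

Hypothesis hK : [pchar K] =i pred0.
Hypothesis hefe : ltp e f e = 2%:R *: e.

Lemma two_neq0 : (2%:R : K) != 0.
Proof. apply/negP => h. have := hK 2%N. rewrite !inE /= h. done. Qed.

Lemma mulrn2I (x y : A) : x *+ 2 = y *+ 2 -> x = y.
Proof. by rewrite -!scaler_nat => /(scalerI two_neq0). Qed.

Definition Ep n (z : A) := iter n (nmul e) z.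

Lemma EpD n (x y : A) : Ep n (x + y) = Ep n x + Ep n y.
Proof. by elim: n => [|n IH] //=; rewrite /Ep /= -/(Ep n x) -/(Ep n y) -/(Ep n (x + y)) IH nmulDr. Qed.
Lemma EpN n (x : A) : Ep n (- x) = - Ep n x.
Proof. by elim: n => [|n IH] //=; rewrite /Ep /= -/(Ep n x) -/(Ep n (- x)) IH nmulNr. Qed.
Lemma EpMn n (x : A) k : Ep n (x *+ k) = Ep n x *+ k.
Proof. by elim: n => [|n IH] //=; rewrite /Ep /= -/(Ep n x) -/(Ep n (x *+ k)) IH nmulnr. Qed.
Lemma EpS n (x : A) : Ep n.+1 x = e ** Ep n x.
Proof. by []. Qed.
Lemma EpSr n (x : A) : Ep n (e ** x) = Ep n.+1 x.
Proof. by rewrite /Ep iterSr. Qed.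

Lemma npowE n : npow e n = Ep n (none A).
Proof. by elim: n => [|n IH] //=; rewrite IH. Qed.

Lemma Lpow n (y : A) : npow e n ** y = Ep n y.
Proof.
elim: n y => [|n IH] y; first by rewrite /= nmul1l.
have h1 : npow e n ** e = npow e n.+1.
  by rewrite IH -[X in Ep n X]nmul1r EpSr -npowE.
have H := LNexp _ he (npow e n) y.
change (e ** npow e n) with (npow e n.+1) in H.
rewrite h1 !IH EpSr -EpS in H.
apply: mulrn2I. zsolve_with H.
Qed.

Definition G n (z : A) := Ep n.-1 z *+ n.
Lemma GD n (x y : A) : G n (x + y) = G n x + G n y.
Proof. by rewrite /G EpD mulrnDl. Qed.
Lemma GN n (x : A) : G n (- x) = - G n x.
Proof. by rewrite /G EpN mulNrn. Qed.
Lemma GMn n (x : A) k : G n (x *+ k) = G n x *+ k.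
Proof. by rewrite /G EpMn mulrnAC. Qed.
Lemma eG n (z : A) : e ** G n z = Ep n z *+ n.
Proof. by case: n => [|n]; rewrite /G nmulnr. Qed.
Lemma Ge n (z : A) : G n (e ** z) = Ep n z *+ n.
Proof. by case: n => [|n]; rewrite /G // EpSr. Qed.

Lemma Dve : Dv e = e *+ 2.
Proof.
rewrite -scaler_nat -hefe /ltp /Dv hc. zsolve.
Qed.

Lemma Dv_e (y : A) : Dv (e ** y) = (e ** y) *+ 2 + e ** Dv y.
Proof. by rewrite Dv_der Dve nmulnl. Qed.

Lemma fe_ (y : A) : f ** (e ** y) = e ** (f ** y) - Dv y.
Proof. rewrite /Dv. zsolve. Qed.

Definition hh n := npow e n ** f.

Lemma formula n (y : A) : (hh n ** y) *+ 2 = Ep n (f ** y) *+ 2 - G n (Dv y).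
Proof.
elim: n y => [|n IH] y.
  by rewrite /hh /= nmul1l /G mulr0n subr0.
have F1 : hh n.+1 = e ** hh n by rewrite /hh !Lpow.
have F2 : hh n ** e = e ** hh n - Ep n (none A) *+ n.
  apply: mulrn2I; rewrite IH Dve GMn -[X in G n X]nmul1r Ge.
  by rewrite /hh Lpow -EpS -EpSr hc mulrnBl.
have F3 := LNexp _ he (hh n) y.
rewrite F2 nmulBl nmulnl -npowE Lpow in F3.
have H1 := IH (e ** y).
rewrite fe_ EpD EpN Dv_e GD GMn !Ge EpSr in H1.
have H2 := congr1 (nmul e) (IH y).
rewrite nmulnr [RHS]nmulDr nmulNr nmulnr eG -EpS in H2.
rewrite F1 /G.
change (Ep n.+1.-1 (Dv y)) with (Ep n (Dv y)).
rewrite [Ep n (Dv y) *+ n.+1]mulrS.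
apply: mulrn2I.
zsw3 H1 H2 F3.
Qed.

Theorem main_sec n : nassoc (npow e n) f e = - (n%:R *: npow e n).
Proof.
have H := formula n e.
rewrite Dve GMn -[X in G n X]nmul1r Ge -npowE in H.
rewrite /nassoc (Lpow n (f ** e)) scaler_nat -/(hh n).
apply: mulrn2I. zsolve_with H.
Qed.

End Main.

Theorem mainTheorem4 (K : fieldType) (hK : [pchar K] =i pred0)
  (A : NAlg K) (e f : A) (hU : is_UEA_S2 e f) (n : nat) :
  nassoc (npow e n) f e = - (n%:R *: npow e n).
Proof.
case: hU => [[he hf hc [hefe _ _ _] _] _ _].
exact: (main_sec _ _ _ _ he hf hc hK hefe).
Qed.
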